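(* Let $X=\{x_j:j\in J\}\subset\mathbb{R}^2$ be a finite set of $n\geq 2$ distinct points, let $s^*$ be its quadratic min-power centre and $M$ its centroid, and let $k=\big|\arg\max_{j\in J}\|s^*-x_j\|\big|$ be the number of points of $X$ at maximum distance from $s^*$. Then $$\rho(X):=\frac{P(M)}{P(s^* )}\leq \frac{1}{k+1}\left(\frac{n+1}{n}\right)^2+\frac{k}{k+1}.$$
   Context: For $s\in\mathbb{R}^2$, $P(s)=\sum_{i\in J}\|s-x_i\|^2+\max_{i\in J}\|s-x_i\|^2$ (Euclidean norm); the min-power centre $s^*$ is the unique minimiser of $P$; $M=\frac1n\sum_{i\in J}x_i$. *)

(* Defs.v *)
From HB Require Import structures.
From mathcomp Require Import all_boot all_order all_algebra.
From mathcomp Require Import reals.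
Set Implicit Arguments. Unset Strict Implicit. Unset Printing Implicit Defensive.
Import Order.TTheory GRing.Theory Num.Theory.
Local Open Scope ring_scope.

Definition sqdist (R : realType) (p q : R * R) : R :=
  (p.1 - q.1) ^+ 2 + (p.2 - q.2) ^+ 2.

(* maximal squared distance from s to the points x_j, j in 'I_n
   (all terms are >= 0, so 0 is a neutral start value) *)
Definition maxsq (R : realType) (n : nat) (x : 'I_n -> R * R) (s : R * R) : R :=
  \big[Num.max/0]_(j < n) sqdist s (x j).

Definition Pcost (R : realType) (n : nat) (x : 'I_n -> R * R) (s : R * R) : R :=
  \sum_(j < n) sqdist s (x j) + maxsq x s.

Definition centroid (R : realType) (n : nat) (x : 'I_n -> R * R) : R * R :=
  ((\sum_(j < n) (x j).1) / n%:R, (\sum_(j < n) (x j).2) / n%:R).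

Definition nfar (R : realType) (n : nat) (x : 'I_n -> R * R) (s : R * R) : nat :=
  #|[set j : 'I_n | sqdist s (x j) == maxsq x s]|.

(* Main.v *)
Require Import Defs.
From HB Require Import structures.
From mathcomp Require Import all_boot all_order all_algebra.
From mathcomp Require Import reals.
From mathcomp Require Import ring lra.
Import Order.TTheory GRing.Theory Num.Theory.
Local Open Scope ring_scope.

Lemma cs (R : realType) (a1 a2 v1 v2 r d : R) : 0 <= r -> 0 <= d ->
  a1^+2+a2^+2 <= r^+2 -> v1^+2+v2^+2 = d^+2 -> a1*v1+a2*v2 <= r*d.
Proof.
move=> r0 d0 ha hv.
have h : (a1*v1+a2*v2)^+2 <= (r*d)^+2.
  have -> : (a1*v1+a2*v2)^+2 = (a1^+2+a2^+2)*(v1^+2+v2^+2) - (a1*v2-a2*v1)^+2 by ring.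
  rewrite hv exprMn; have := sqr_ge0 (a1*v2-a2*v1); have := sqr_ge0 d; nra.
have := mulr_ge0 r0 d0; nra.
Qed.
Arguments cs {R a1 a2 v1 v2 r d}.

Lemma sqdist_ge0 (R : realType) (p q : R * R) : 0 <= sqdist p q.
Proof. by rewrite /sqdist addr_ge0 // sqr_ge0. Qed.

Lemma le_maxsq (R : realType) n (x : 'I_n -> R * R) s j : sqdist s (x j) <= maxsq x s.
Proof. exact: le_bigmax. Qed.
Arguments le_maxsq {R n} x s j.

Lemma maxsq_ge0 (R : realType) n (x : 'I_n -> R * R) s : (0 < n)%N -> 0 <= maxsq x s.
Proof. move=> n0; apply: (@le_trans _ _ (sqdist s (x (Ordinal n0)))); [exact: sqdist_ge0 | exact: le_maxsq]. Qed.
Arguments maxsq_ge0 {R n} x s.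

Lemma maxsq_shift (R : realType) n (x : 'I_n -> R * R) (s w : R * R) (r dw : R) :
  0 <= r -> maxsq x s <= r^+2 -> 0 <= dw -> w.1^+2 + w.2^+2 = dw^+2 ->
  maxsq x (s.1 + w.1, s.2 + w.2) <= (r + dw)^+2.
Proof.
move=> r0 hm d0 hw; apply: bigmax_le; first exact: sqr_ge0.
move=> j _; rewrite /sqdist /=.
have hj := le_trans (le_maxsq x s j) hm; rewrite /sqdist in hj.
have := cs r0 d0 hj hw.
have -> : (s.1 + w.1 - (x j).1) ^+ 2 + (s.2 + w.2 - (x j).2) ^+ 2 =
  ((s.1 - (x j).1) ^+ 2 + (s.2 - (x j).2) ^+ 2) + 2 * ((s.1 - (x j).1) * w.1 + (s.2 - (x j).2) * w.2)
   + (w.1^+2 + w.2^+2) by ring.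
rewrite hw; nra.
Qed.

Lemma Sform (R : realType) n (x : 'I_n -> R * R) (s : R * R) :
  \sum_(j < n) sqdist s (x j) = n%:R * (s.1^+2 + s.2^+2)
    - 2 * (s.1 * \sum_(j < n) (x j).1 + s.2 * \sum_(j < n) (x j).2)
    + \sum_(j < n) ((x j).1^+2 + (x j).2^+2).
Proof.
rewrite (eq_bigr (fun j => (s.1^+2+s.2^+2) - 2*(s.1*(x j).1 + s.2*(x j).2)
   + ((x j).1^+2+(x j).2^+2))); last by move=> j _; rewrite /sqdist; ring.
rewrite big_split sumrB /= sumr_const card_ord -mulr_sumr big_split -!mulr_sumr /=.
rewrite -mulr_natl; ring.
Qed.

Lemma count_far (R : realType) n (x : 'I_n -> R * R) s :
  (nfar x s)%:R * maxsq x s <= \sum_(j < n) sqdist s (x j).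
Proof.
rewrite (bigID (fun j => j \in [set j : 'I_n | sqdist s (x j) == maxsq x s])) /=.
rewrite (eq_bigr (fun _ => maxsq x s)); last by move=> j; rewrite inE => /eqP.
rewrite sumr_const /nfar mulr_natl -[X in X <= _]addr0 lerD //.
by apply: sumr_ge0 => j _; apply: sqdist_ge0.
Qed.
Arguments maxsq_shift {R n} x s w r dw.
Arguments Sform {R n} x s.
Arguments count_far {R n} x s.

Theorem theorem2 (R : realType) (n : nat) (x : 'I_n -> R * R) (sstar : R * R) :
  (2 <= n)%N ->
  injective x ->
  (forall s : R * R, Pcost x sstar <= Pcost x s) ->
  let k := nfar x sstar in
  Pcost x (centroid x) / Pcost x sstar <=
    (k.+1%:R)^-1 * ((n.+1)%:R / n%:R) ^+ 2 + k%:R / k.+1%:R.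
Proof.
move=> n2 _ opt; cbv zeta; set k := nfar x sstar.
have n0 : (0 < n)%N by apply: leq_trans n2.
set N : R := n%:R.
have N0 : 0 < N by rewrite ltr0n.
set c := centroid x.
set A1 := \sum_(j < n) (x j).1.
set A2 := \sum_(j < n) (x j).2.
have hA1 : A1 = N * c.1 by rewrite /c /centroid /= mulrC divfK // gt_eqF.
have hA2 : A2 = N * c.2 by rewrite /c /centroid /= mulrC divfK // gt_eqF.
set v1 := c.1 - sstar.1.
set v2 := c.2 - sstar.2.
have hv0 : 0 <= v1^+2 + v2^+2 by rewrite addr_ge0 // sqr_ge0.
set d := Num.sqrt (v1^+2 + v2^+2).
have hd : d^+2 = v1^+2 + v2^+2 by rewrite sqr_sqrtr.
have d0 : 0 <= d by rewrite sqrtr_ge0.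
have hm0 := maxsq_ge0 x sstar n0.
set r := Num.sqrt (maxsq x sstar).
have hr : r^+2 = maxsq x sstar by rewrite sqr_sqrtr.
have r0 : 0 <= r by rewrite sqrtr_ge0.
set T := \sum_(j < n) sqdist sstar (x j).
have PT : Pcost x sstar = T + r^+2 by rewrite hr.
have Ndr : N * d <= r.
  rewrite leNgt; apply/negP => H.
  have dpos : 0 < d.
    rewrite lt0r d0 andbT; apply/eqP => d00; move: H; rewrite d00 mulr0; lra.
  set t := (N * d - r) / ((N + 1) * d).
  have hNd : (N + 1) * d != 0 by rewrite mulf_neq0 // gt_eqF //; lra.
  have ht : t * ((N + 1) * d) = N * d - r by rewrite /t divfK.
  have t0 : 0 < t by rewrite /t divr_gt0 //; [lra | rewrite mulr_gt0 //; lra].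
  have := opt (sstar.1 + t * v1, sstar.2 + t * v2).
  rewrite /Pcost -/T -hr.
  have hmr : maxsq x sstar <= r^+2 by rewrite hr.
  have hw : (t * v1, t * v2).1 ^+ 2 + (t * v1, t * v2).2 ^+ 2 = (t * d)^+2.
    by rewrite /= !exprMn -mulrDr hd.
  have hsh := maxsq_shift x sstar (t * v1, t * v2) r (t * d) r0 hmr (mulr_ge0 (ltW t0) d0) hw.
  have ES : \sum_(j < n) sqdist (sstar.1 + t * v1, sstar.2 + t * v2) (x j) =
      T + N * t^+2 * d^+2 - 2 * t * N * d^+2.
    rewrite /T !Sform -/A1 -/A2 hA1 hA2 hd /v1 /v2 /=; ring.
  rewrite ES => hle.
  have : 0 <= N * t^+2 * d^+2 - 2 * t * N * d^+2 + (r + t * d)^+2 - r^+2 by lra.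
  have -> : N * t^+2 * d^+2 - 2 * t * N * d^+2 + (r + t * d)^+2 - r^+2
      = t * d * (t * ((N + 1) * d) + 2 * r - 2 * N * d) by ring.
  rewrite ht.
  have : 0 < t * d by rewrite mulr_gt0.
  nra.
have hmc : maxsq x c <= (r + d)^+2.
  have hmr : maxsq x sstar <= r^+2 by rewrite hr.
  have hw : (v1, v2).1 ^+ 2 + (v1, v2).2 ^+ 2 = d^+2 by rewrite hd.
  have := maxsq_shift x sstar (v1, v2) r d r0 hmr d0 hw.
  by rewrite /= /v1 /v2 !subrKC -surjective_pairing.
have ESc : \sum_(j < n) sqdist c (x j) = T - N * d^+2.
  rewrite /T !Sform -/A1 -/A2 hA1 hA2 hd /v1 /v2 /=; ring.
have PC : Pcost x c <= T - N * d^+2 + (r + d)^+2 by rewrite /Pcost ESc lerD.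
set K : R := k%:R.
have K0 : 0 <= K by rewrite ler0n.
have TK : K * r^+2 <= T by rewrite hr; exact: count_far.
have hr20 : 0 <= r^+2 by rewrite sqr_ge0.
have T0 : 0 <= T by have := mulr_ge0 K0 hr20; lra.
rewrite -!natr1 -/N -/K.
set b := (N + 1) / N.
have hb : b * N = N + 1 by rewrite /b divfK // gt_eqF.
have b1 : 1 <= b.
  have : N <= b * N by rewrite hb; lra.
  by rewrite -ler_pdivrMr // divff ?gt_eqF.
have hrd : (r + d)^+2 <= (b * r)^+2.
  have : (r + d) * N <= b * r * N by rewrite mulrAC hb; nra.
  rewrite ler_pM2r // => h; have := addr_ge0 r0 d0; nra.
have Kp : 0 < K + 1 by lra.
have RHS : (K + 1)^-1 * b^+2 + K / (K + 1) = (b^+2 + K) / (K + 1).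
  by field; rewrite gt_eqF.
rewrite RHS.
have [Q0|Qp] := eqVneq (Pcost x sstar) 0.
  rewrite Q0 invr0 mulr0 divr_ge0 //; last by lra.
  by rewrite addr_ge0 // sqr_ge0.
have Qpos : 0 < Pcost x sstar by rewrite lt0r Qp PT addr_ge0.
rewrite ler_pdivrMr // mulrAC ler_pdivlMr // PT.
have hP : Pcost x c <= T + b^+2 * r^+2.
  have := mulr_ge0 (ltW N0) (sqr_ge0 d); rewrite -exprMn in hrd |- *; nra.
have b21 : 1 <= b^+2 by rewrite -[1](expr1n _ 2); rewrite lerXn2r // ?nnegrE //; lra.
have : 0 <= (b^+2 - 1) * (T - K * r^+2) by rewrite mulr_ge0 // subr_ge0.
nra.
Qed.
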